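(* Let $\Gamma$ be a finite triangle-free simplicial graph containing a $K_{3,3}$ subdivision $\Lambda$, and suppose $\Lambda$ has the minimum number of edges among all $K_{3,3}$ subdivisions $\Lambda''\subseteq\Gamma$ with $B(\Lambda'')\le B(\Lambda)$. Then $\Lambda$ has no bad edge with both endpoints on a single branch of $\Lambda$, and no bad edge connecting two $\Lambda$-non-essential vertices lying on adjacent branches of $\Lambda$.
   Context: A subdivision of a graph $H$ is obtained from $H$ by repeatedly inserting valence-two vertices into edges. For a $K_{3,3}$ subdivision $\Lambda\subseteq\Gamma$, the $\Lambda$-essential vertices are those of valence $3$ in $\Lambda$; other vertices of $\Lambda$ are $\Lambda$-non-essential. A branch of $\Lambda$ is a path in $\Lambda$ between two $\Lambda$-essential vertices with no other $\Lambda$-essential vertex on it; two branches are adjacent if they share an endpoint and disjoint otherwise. A bad edge of $\Lambda$ is an edge of $\Gamma$ not in $\Lambda$ whose endpoints are both vertices of $\Lambda$; $B(\Lambda)$ is the number of bad edges. *)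

(* Defs.v *)
(* Finite simple graphs as a symmetric irreflexive relation
   e : rel T on a finType T; edges are represented as 2-element sets [set x; y]. *)
From mathcomp Require Import all_boot.
Set Implicit Arguments. Unset Strict Implicit. Unset Printing Implicit Defensive.

Definition gedges (T : finType) (e : rel T) : {set {set T}} :=
  [set [set p.1; p.2] | p in [set p : T * T | e p.1 p.2]].

Definition triangle_free (T : finType) (e : rel T) : Prop :=
  forall x y z, e x y -> e y z -> e z x -> False.

Definition wedges (T : finType) (s : seq T) : {set {set T}} :=
  \bigcup_(p <- zip s (behead s)) [set [set p.1; p.2]].

(* (V, E) is a subgraph of Gamma that is a subdivision of K_{3,3}:
   six distinct branch vertices a_0,a_1,a_2 / b_0,b_1,b_2, and for every i, j a
   path a_i -- p i j -- b_j in Gamma, whose interior vertices are not branch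
   vertices and are disjoint from the interiors of the other paths;
   V and E are exactly the vertices and edges of these nine paths. *)
Definition isK33sub (T : finType) (e : rel T) (V : {set T}) (E : {set {set T}}) : Prop :=
  exists (a b : 'I_3 -> T) (p : 'I_3 -> 'I_3 -> seq T),
    [/\ [/\ injective a, injective b, (forall i j, a i != b j),
        (forall i j, path e (a i) (rcons (p i j) (b j))) &
        (forall i j, uniq (a i :: rcons (p i j) (b j)))],
        (forall i j x, x \in p i j -> forall k, x != a k /\ x != b k),
        (forall i j i' j' x, x \in p i j -> x \in p i' j' -> i = i' /\ j = j'),
        V = \bigcup_(i < 3) \bigcup_(j < 3) [set x in a i :: rcons (p i j) (b j)]
      & E = \bigcup_(i < 3) \bigcup_(j < 3) wedges (a i :: rcons (p i j) (b j))].

Definition degE (T : finType) (E : {set {set T}}) (x : T) : nat :=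
  #|[set y | [set x; y] \in E]|.

Definition essential (T : finType) (V : {set T}) (E : {set {set T}}) (x : T) : bool :=
  (x \in V) && (degE E x == 3).

Definition ladj (T : finType) (E : {set {set T}}) : rel T :=
  fun x y => [set x; y] \in E.

Definition branch (T : finType) (V : {set T}) (E : {set {set T}}) (s : seq T) : bool :=
  if s is x :: t then
    [&& t != [::], uniq s, path (ladj E) x t, essential V E x,
        essential V E (last x t) &
        all (fun z => [|| z == x, z == last x t | ~~ essential V E z]) s]
  else false.

Definition bends (T : finType) (s : seq T) : {set T} :=
  if s is x :: t then [set x; last x t] else set0.

(* two different branches sharing an endpoint (a branch is identified with its reverse) *)
Definition adjacent_branches (T : finType) (V : {set T}) (E : {set {set T}}) (s1 s2 : seq T) : Prop :=
  [/\ branch V E s1, branch V E s2, s2 <> s1, s2 <> rev s1 & bends s1 :&: bends s2 != set0].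

Definition bad_edge (T : finType) (e : rel T) (V : {set T}) (E : {set {set T}}) (x y : T) : bool :=
  [&& e x y, [set x; y] \notin E, x \in V & y \in V].

Definition nbad (T : finType) (e : rel T) (V : {set T}) (E : {set {set T}}) : nat :=
  #|[set f in gedges e | (f \notin E) && (f \subset V)]|.

(* Main.v *)
Require Import Defs.
From mathcomp Require Import all_boot zify.
Set Implicit Arguments. Unset Strict Implicit.

Section SeqLemmas.
Variable T : eqType.

Definition cp (s : seq T) := zip s (behead s).

Lemma cp_cons2 (x y : T) s : cp [:: x, y & s] = (x, y) :: cp (y :: s).
Proof. by []. Qed.

Lemma cp_mem (s : seq T) c d : (c, d) \in cp s -> c \in s /\ d \in s.
Proof.
elim: s => [|w s IH] //=; case: s IH => [|w' s] IH //=.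
rewrite in_cons => /orP[/eqP[-> ->]|/IH[h1 h2]].
  by rewrite !in_cons !eqxx orbT.
by split; rewrite in_cons; apply/orP; right.
Qed.

Lemma cp_split (s : seq T) c d :
  (c, d) \in cp s <-> exists s1 s2, s = s1 ++ c :: d :: s2.
Proof.
split.
  elim: s => [|w s IH] //=; case: s IH => [|w' s] IH //=.
  rewrite in_cons => /orP[/eqP[-> ->]|/IH[s1 [s2 E]]].
    by exists [::], s.
  by exists (w :: s1), s2; rewrite E.
case=> s1 [s2 ->]; elim: s1 => [|w s1 IH] /=.
  by rewrite in_cons eqxx.
by case: s1 IH => [|w' s1] IH /=; rewrite in_cons IH orbT.
Qed.

Lemma cp_catr s1 s2 c d :
  (c, d) \in cp s2 -> (c, d) \in cp (s1 ++ s2).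
Proof.
move/cp_split=> [t1 [t2 ->]]; apply/cp_split; exists (s1 ++ t1), t2.
by rewrite -catA.
Qed.

Lemma cp_catl' s1 s2 c d :
  (c, d) \in cp s1 -> (c, d) \in cp (s1 ++ s2).
Proof.
move/cp_split=> [t1 [t2 ->]]; apply/cp_split; exists t1, (t2 ++ s2).
by rewrite -catA.
Qed.

Lemma cp_cat (u : seq T) x v c d :
  (c, d) \in cp (u ++ x :: v) <-> (c, d) \in cp (rcons u x) \/ (c, d) \in cp (x :: v).
Proof.
split; last first.
  case=> H.
    by rewrite -[u ++ x :: v]/(u ++ [:: x] ++ v) catA cats1; apply: cp_catl'.
  exact: cp_catr.
elim: u => [|w u IH] /=; first by right.
case: u IH => [|w' u] IH /=.
  rewrite in_cons => /orP[/eqP[-> ->]|H]; first by left; rewrite in_cons eqxx.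
  by right.
rewrite in_cons => /orP[/eqP[-> ->]|/IH[H|H]].
- by left; rewrite in_cons eqxx.
- by left; rewrite in_cons H orbT.
- by right.
Qed.

Lemma cp_rev (s : seq T) c d : ((c, d) \in cp (rev s)) = ((d, c) \in cp s).
Proof.
apply/idP/idP.
  move/cp_split=> [s1 [s2 E]]; apply/cp_split; exists (rev s2), (rev s1).
  by rewrite -(revK s) E rev_cat /= rev_cons rev_cons -!cats1 -!catA.
move/cp_split=> [s1 [s2 E]]; apply/cp_split; exists (rev s2), (rev s1).
by rewrite E rev_cat /= rev_cons rev_cons -!cats1 -!catA.
Qed.

Lemma uniq_split (s1 s2 t1 t2 : seq T) c :
  uniq (s1 ++ c :: t1) -> s1 ++ c :: t1 = s2 ++ c :: t2 -> s1 = s2 /\ t1 = t2.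
Proof.
elim: s1 s2 => [|w s1 IH] [|w' s2] //=.
- by move=> _ [->].
- move=> /andP[Hc _] [E1 E2]; exfalso; move: Hc; rewrite E2 E1 mem_cat in_cons eqxx.
  by rewrite orbT.
- move=> /andP[Hc _] [E1 E2]; exfalso; move: Hc; rewrite E1 mem_cat in_cons eqxx.
  by rewrite orbT.
move=> /andP[_ U] [-> E]; by case: (IH s2 U E) => -> ->.
Qed.

Lemma cp_uniq_r (s : seq T) c d d' :
  uniq s -> (c, d) \in cp s -> (c, d') \in cp s -> d = d'.
Proof.
move=> U /cp_split[s1 [s2 E1]] /cp_split[s1' [s2' E2]].
move: U; rewrite E1 => U; rewrite E2 in E1.
by case: (uniq_split U (esym E1)) => _ [->].
Qed.

Lemma cp_uniq_l (s : seq T) c c' d :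
  uniq s -> (c, d) \in cp s -> (c', d) \in cp s -> c = c'.
Proof.
move=> U H1 H2; apply: (@cp_uniq_r (rev s) d); rewrite ?rev_uniq ?cp_rev //.
Qed.

Lemma cp_head (s : seq T) x c : uniq (x :: s) -> (c, x) \notin cp (x :: s).
Proof.
move=> U; apply/negP => /cp_split[s1 [s2 E]].
case: s1 E => [|w s1] /= [E1 E2].
  by move: U; rewrite E2 /= in_cons eqxx.
by move: U; rewrite /= E2 mem_cat !in_cons eqxx !orbT.
Qed.

Lemma cp_last (s : seq T) x d : uniq (rcons s x) -> (x, d) \notin cp (rcons s x).
Proof.
move=> U; apply/negP; rewrite -cp_rev rev_rcons; apply/negP; apply: cp_head.
by rewrite -rev_rcons rev_uniq.
Qed.

Lemma cp_neq (s : seq T) c d : uniq s -> (c, d) \in cp s -> c != d.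
Proof.
move=> U /cp_split[s1 [s2 E]]; move: U; rewrite E cat_uniq /= in_cons.
by case: eqP => //= ->; rewrite ?eqxx ?andbF.
Qed.

End SeqLemmas.
Section Wedges.
Variable T : finType.

Lemma mem_wedges (s : seq T) f :
  f \in wedges s <-> exists c d, (c, d) \in cp s /\ f = [set c; d].
Proof.
rewrite /wedges bigcup_seq; split.
  by move/bigcupP=> [[c d] H]; rewrite in_set1 => /eqP ->; exists c, d; split.
case=> c [d [H E]]; rewrite E; apply/bigcupP; exists (c, d) => //; by rewrite in_set1.
Qed.

Lemma wedges_cp (s : seq T) c d : (c, d) \in cp s -> [set c; d] \in wedges s.
Proof. by move=> H; apply/mem_wedges; exists c, d. Qed.

Lemma set2_eq (c d c' d' : T) :
  [set c; d] = [set c'; d'] -> (c = c' /\ d = d') \/ (c = d' /\ d = c').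
Proof.
move=> E.
have Hc : c \in [set c'; d'] by rewrite -E !inE eqxx.
have Hd : d \in [set c'; d'] by rewrite -E !inE eqxx orbT.
have Hc' : c' \in [set c; d] by rewrite E !inE eqxx.
have Hd' : d' \in [set c; d] by rewrite E !inE eqxx orbT.
move: Hc Hd Hc' Hd'; rewrite !inE.
move=> /orP[/eqP Ec|/eqP Ec] /orP[/eqP Ed|/eqP Ed] /orP[/eqP Ec'|/eqP Ec'] /orP[/eqP Ed'|/eqP Ed'];
  subst; first [by left; split | by right; split].
Qed.

End Wedges.
Section K33.
Variable T : finType.
Variable e : rel T.

Definition inn (a b : 'I_3 -> T) (P : 'I_3 -> 'I_3 -> seq T) i j x :=
  [&& x \in P i j, x != a i & x != b j].

Record K33P (a b : 'I_3 -> T) (P : 'I_3 -> 'I_3 -> seq T) : Prop := {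
  k_inja : injective a;
  k_injb : injective b;
  k_ab : forall i j, a i != b j;
  k_size : forall i j, 1 < size (P i j);
  k_head : forall i j, exists t, P i j = a i :: t;
  k_last : forall i j, last (a i) (P i j) = b j;
  k_path : forall i j c d, (c, d) \in cp (P i j) -> e c d;
  k_uniq : forall i j, uniq (P i j);
  k_notab : forall i j x, inn a b P i j x -> forall k, x != a k /\ x != b k;
  k_disj : forall i j i' j' x, inn a b P i j x -> inn a b P i' j' x -> i = i' /\ j = j'
}.

Definition VP (P : 'I_3 -> 'I_3 -> seq T) : {set T} :=
  \bigcup_(i < 3) \bigcup_(j < 3) [set x in P i j].
Definition EP (P : 'I_3 -> 'I_3 -> seq T) : {set {set T}} :=
  \bigcup_(i < 3) \bigcup_(j < 3) wedges (P i j).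

Lemma mem_VP P x : x \in VP P <-> exists i j, x \in P i j.
Proof.
split.
  by case/bigcupP=> i _ /bigcupP[j _]; rewrite inE => H; exists i, j.
case=> i [j H]; apply/bigcupP; exists i => //; apply/bigcupP; exists j => //.
by rewrite inE.
Qed.

Lemma mem_EP P f :
  f \in EP P <-> exists i j c d, (c, d) \in cp (P i j) /\ f = [set c; d].
Proof.
split.
  case/bigcupP=> i _ /bigcupP[j _] /mem_wedges[c [d [H1 H2]]].
  by exists i, j, c, d.
case=> i [j [c [d [H1 H2]]]]; apply/bigcupP; exists i => //; apply/bigcupP.
by exists j => //; apply/mem_wedges; exists c, d.
Qed.

Lemma EP_cp P i j c d : (c, d) \in cp (P i j) -> [set c; d] \in EP P.
Proof. by move=> H; apply/mem_EP; exists i, j, c, d. Qed.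

Lemma path_cp x s c d : path e x s -> (c, d) \in cp (x :: s) -> e c d.
Proof.
elim: s x => [|y s IH] x //= /andP[H1 H2].
rewrite in_cons => /orP[/eqP[-> ->] //|]; exact: IH.
Qed.

Lemma cp_path x s : (forall c d, (c, d) \in cp (x :: s) -> e c d) -> path e x s.
Proof.
elim: s x => [|y s IH] x //= H; apply/andP; split.
  by apply: H; rewrite in_cons eqxx.
by apply: IH => c d Hcd; apply: H; rewrite in_cons Hcd orbT.
Qed.

Definition pp (s : seq T) := if s is _ :: t0 :: t' then belast t0 t' else [::].

Lemma pp_eq s a b : 1 < size s -> (exists t, s = a :: t) -> last a s = b ->
  s = a :: rcons (pp s) b.
Proof.
move=> Hs [t Et]; rewrite Et in Hs *; case: t Et Hs => [|t0 t] // Et _ /= <-.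
by rewrite -lastI.
Qed.

Lemma K33_of V E : isK33sub e V E ->
  exists a b P, [/\ K33P a b P, V = VP P & E = EP P].
Proof.
case=> a [b [p [[Ia Ib Iab Hp Hu] Hnab Hd -> ->]]].
have inn_p : forall i j x, inn a b (fun i j => a i :: rcons (p i j) (b j)) i j x -> x \in p i j.
  move=> i j x /and3P[]; rewrite in_cons => /orP[/eqP->|]; first by rewrite eqxx.
  by rewrite -cats1 mem_cat inE => /orP[//|/eqP ->]; rewrite eqxx.
exists a, b, (fun i j => a i :: rcons (p i j) (b j)); split => //.
split => //.
- by move=> i j /=; rewrite size_rcons.
- by move=> i j; exists (rcons (p i j) (b j)).
- by move=> i j /=; rewrite last_rcons.
- by move=> i j c d; apply: path_cp.
- by move=> i j x /inn_p H k; apply: Hnab H k.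
- by move=> i j i' j' x /inn_p H1 /inn_p H2; apply: Hd H1 H2.
Qed.

Lemma K33_to a b P : K33P a b P -> isK33sub e (VP P) (EP P).
Proof.
case=> Ia Ib Iab Hs Hh Hl Hp Hu Hn Hd.
have HP : forall i j, P i j = a i :: rcons (pp (P i j)) (b j).
  by move=> i j; apply: pp_eq.
have pinn : forall i j x, x \in pp (P i j) -> inn a b P i j x.
  move=> i j x Hx; have := Hu i j; rewrite HP /= => /andP[Ha U].
  rewrite /inn HP in_cons -cats1 mem_cat Hx /= orbT /=.
  apply/andP; split; apply/negP => /eqP Ex; subst x.
    by move: Ha; rewrite -cats1 mem_cat Hx.
  by move: U; rewrite rcons_uniq Hx.
exists a, b, (fun i j => pp (P i j)); split.
- split => // i j.
    by apply: cp_path; rewrite -HP; apply: Hp.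
  by rewrite -HP.
- by move=> i j x /pinn H k; apply: Hn H k.
- by move=> i j i' j' x /pinn H1 /pinn H2; apply: Hd H1 H2.
- by apply: eq_bigr => i _; apply: eq_bigr => j _; rewrite -HP.
- by apply: eq_bigr => i _; apply: eq_bigr => j _; rewrite -HP.
Qed.

End K33.
Section SeqMore.
Variable T : eqType.

Lemma last_rev0 (x0 : T) s : last x0 (rev s) = head x0 s.
Proof. by case: s => //= y s; rewrite rev_cons last_rcons. Qed.

Lemma cp_next (s : seq T) x x0 :
  x \in s -> x != last x0 s -> exists d, (x, d) \in cp s.
Proof.
elim: s x0 => [|w s IH] x0 //; rewrite in_cons /=.
case: (x =P w) => [->|Hxw] /=.
  move=> _ Hl; case: s IH Hl => [|w' s] IH Hl /=; first by rewrite eqxx in Hl.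
  by exists w'; rewrite in_cons eqxx.
move=> Hx Hl; case: (IH w Hx Hl) => d Hd; exists d.
by rewrite -cat1s; apply: cp_catr.
Qed.

Lemma cp_prev (s : seq T) x x0 :
  x \in s -> x != head x0 s -> exists c, (c, x) \in cp s.
Proof.
move=> Hx Hh; case: (@cp_next (rev s) x x0); rewrite ?mem_rev ?last_rev0 //.
by move=> c; rewrite cp_rev => H; exists c.
Qed.

End SeqMore.

Section Struct.
Variable T : finType.
Variable e : rel T.
Variables (a b : 'I_3 -> T) (P : 'I_3 -> 'I_3 -> seq T).
Hypothesis K : K33P e a b P.

Lemma a_in i j : a i \in P i j.
Proof. by case: (k_head K i j) => t ->; rewrite in_cons eqxx. Qed.

Lemma b_in i j : b j \in P i j.
Proof.
case: (k_head K i j) => t E; rewrite -(k_last K i j) E /=; exact: mem_last.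
Qed.

Lemma P_cases i j x : x \in P i j -> [\/ x = a i, x = b j | inn a b P i j x].
Proof.
move=> H; case: (x =P a i) => [|/eqP Ha]; first by constructor 1.
case: (x =P b j) => [|/eqP Hb]; first by constructor 2.
by constructor 3; rewrite /inn H Ha Hb.
Qed.

Lemma inn_in i j x : inn a b P i j x -> x \in P i j.
Proof. by case/and3P. Qed.

Lemma a_k_in k i j : a k \in P i j -> k = i.
Proof.
case/P_cases => [/(k_inja K) //|H|/(k_notab K) /(_ k) [] ]; last by rewrite eqxx.
by move: (k_ab K k j); rewrite H eqxx.
Qed.

Lemma b_k_in k i j : b k \in P i j -> k = j.
Proof.
case/P_cases => [H|/(k_injb K) //|/(k_notab K) /(_ k) [] ]; last by rewrite eqxx.
by move: (k_ab K i k); rewrite H eqxx.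
Qed.

Lemma inn_uniq i j k l x : inn a b P i j x -> x \in P k l -> k = i /\ l = j.
Proof.
move=> H Hx; have [Ha Hb] := k_notab K H k; have [_ Hb'] := k_notab K H l.
by case: (k_disj K H (_ : inn a b P k l x)) => [|-> ->] //; rewrite /inn Hx Ha Hb'.
Qed.

Definition sec i l := nth (a i) (P i l) 1.

Lemma sec_cp i l : (a i, sec i l) \in cp (P i l).
Proof.
rewrite /sec; have := k_size K i l; case: (k_head K i l) => t ->.
by case: t => [|t0 t] //= _; rewrite in_cons eqxx.
Qed.

Lemma nb_a i w : [set a i; w] \in EP P -> exists l, (a i, w) \in cp (P i l).
Proof.
case/mem_EP=> k [l [c [d [H E]]]]; have [Hc Hd] := cp_mem H.
case: (set2_eq E) => [[Ec Ed]|[Ec Ed]]; subst c d.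
  by move: (a_k_in Hc) => Ek; subst k; exists l.
exfalso; move: (a_k_in Hd) => Ek; subst k.
case: (k_head K i l) H => t Et; rewrite Et => H.
have U : uniq (a i :: t) by rewrite -Et (k_uniq K).
by have := @cp_head _ t (a i) w U; rewrite H.
Qed.

Lemma sec_inj i : injective (sec i).
Proof.
move=> l l' E.
have H1 := sec_cp i l; have H2 := sec_cp i l'.
have [_ Hs] := cp_mem H2; rewrite -E in Hs.
have [_ Hs1] := cp_mem H1.
case: (P_cases Hs1) => [Ea|Eb|Hin].
- by move: (cp_neq (k_uniq K i l) H1); rewrite Ea eqxx.
- by rewrite Eb in Hs; move: (b_k_in Hs).
- by case: (inn_uniq Hin Hs).
Qed.

Lemma deg_a i : degE (EP P) (a i) = 3.
Proof.
rewrite /degE.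
have -> : [set y | [set a i; y] \in EP P] = [set sec i l | l : 'I_3].
  apply/setP=> w; rewrite inE; apply/idP/imsetP.
    case/nb_a=> l H; exists l => //; exact: (cp_uniq_r (k_uniq K i l) H (sec_cp i l)).
  by case=> l _ ->; apply: (EP_cp (sec_cp i l)).
by rewrite card_imset ?card_ord //; apply: sec_inj.
Qed.

Lemma deg_inn i j x : inn a b P i j x -> degE (EP P) x <= 2.
Proof.
move=> H; have Hx := inn_in H; move: (H) => /and3P[_ Ha Hb].
case: (k_head K i j) => t Et.
case: (@cp_next _ (P i j) x (a i) Hx); first by rewrite (k_last K).
move=> d0 Hd0.
case: (@cp_prev _ (P i j) x (a i) Hx); first by rewrite Et.
move=> c0 Hc0.
apply: (@leq_trans #|[set c0; d0]|); last by rewrite cards2 ltnS leq_b1.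
apply: subset_leq_card; apply/subsetP=> w; rewrite inE.
case/mem_EP=> k [l [c [d [Hcd E]]]]; have [Hc Hd] := cp_mem Hcd.
case: (set2_eq E) => [[Ec Ed]|[Ec Ed]]; subst c d.
  case: (inn_uniq H Hc) => ? ?; subst k l.
  by rewrite (cp_uniq_r (k_uniq K i j) Hcd Hd0) !inE eqxx orbT.
case: (inn_uniq H Hd) => ? ?; subst k l.
by rewrite (cp_uniq_l (k_uniq K i j) Hcd Hc0) !inE eqxx.
Qed.

Lemma VP_a i : a i \in VP P.
Proof. by apply/mem_VP; exists i, i; apply: a_in. Qed.
Lemma VP_b j : b j \in VP P.
Proof. by apply/mem_VP; exists j, j; apply: b_in. Qed.

Lemma ess_a i : essential (VP P) (EP P) (a i).
Proof. by rewrite /essential VP_a deg_a. Qed.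

Lemma ess_in i j x : essential (VP P) (EP P) x -> x \in P i j -> x = a i \/ x = b j.
Proof.
move=> /andP[_ /eqP Hd] /P_cases[->|->|H]; [by left|by right|].
by move: (deg_inn H); rewrite Hd.
Qed.

End Struct.
Section Transpose.
Variable T : finType.
Variable e : rel T.
Hypothesis e_sym : symmetric e.

Definition PT (P : 'I_3 -> 'I_3 -> seq T) := fun j i => rev (P i j).

Lemma innT a b P i j x : inn b a (PT P) j i x = inn a b P i j x.
Proof. by rewrite /inn /PT mem_rev; case: (x \in P i j) => //=; apply: andbC. Qed.

Lemma K33_T a b P : K33P e a b P -> K33P e b a (PT P).
Proof.
move=> K; split.
- exact: (k_injb K).
- exact: (k_inja K).
- by move=> i j; rewrite eq_sym (k_ab K).
- by move=> i j; rewrite /PT size_rev (k_size K).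
- move=> j i; rewrite /PT (pp_eq (k_size K i j) (k_head K i j) (k_last K i j)).
  by rewrite rev_cons rev_rcons rcons_cons; eexists.
- move=> j i; rewrite /PT last_rev0.
  by case: (k_head K i j) => t ->.
- by move=> j i c d; rewrite /PT cp_rev => /(k_path K); rewrite e_sym.
- by move=> j i; rewrite /PT rev_uniq (k_uniq K).
- by move=> j i x; rewrite innT => /(k_notab K) H k; case: (H k).
- by move=> j i j' i' x; rewrite !innT => H1 H2; case: (k_disj K H1 H2) => -> ->.
Qed.

Lemma VP_T P : VP (PT P) = VP P.
Proof.
apply/setP=> x; apply/idP/idP.
  by case/mem_VP=> j [i]; rewrite /PT mem_rev => H; apply/mem_VP; exists i, j.
by case/mem_VP=> i [j] H; apply/mem_VP; exists j, i; rewrite /PT mem_rev.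
Qed.

Lemma EP_T P : EP (PT P) = EP P.
Proof.
apply/setP=> f; apply/idP/idP.
  case/mem_EP=> j [i [c [d [H ->]]]]; rewrite /PT cp_rev in H.
  by rewrite setUC; apply: EP_cp H.
case/mem_EP=> i [j [c [d [H ->]]]]; rewrite setUC; apply/mem_EP.
by exists j, i, d, c; rewrite /PT cp_rev.
Qed.

End Transpose.

Section Ident.
Variable T : finType.
Variable e : rel T.
Hypothesis e_sym : symmetric e.
Variables (a b : 'I_3 -> T) (P : 'I_3 -> 'I_3 -> seq T).
Hypothesis K : K33P e a b P.

Lemma ess_b j : essential (VP P) (EP P) (b j).
Proof. by rewrite -VP_T -EP_T; apply: (ess_a (K33_T e_sym K)). Qed.

Lemma noness_inn i j x :
  x \in P i j -> ~~ essential (VP P) (EP P) x -> inn a b P i j x.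
Proof.
case/(P_cases a b) => [->|->|//]; first by rewrite (ess_a K).
by rewrite ess_b.
Qed.

Lemma edge_in_P x y : [set x; y] \in EP P -> exists i j, x \in P i j /\ y \in P i j.
Proof.
case/mem_EP=> i [j [c [d [H E]]]]; have [Hc Hd] := cp_mem H; exists i, j.
by case: (set2_eq E) => [[-> ->]|[-> ->]].
Qed.

Lemma follow i j r w : w \in P i j -> path (ladj (EP P)) w r ->
  (forall z, z \in belast w r -> ~~ essential (VP P) (EP P) z) ->
  {subset w :: r <= P i j}.
Proof.
elim: r w => [|w' r IH] w Hw /=.
  by move=> _ _ z; rewrite inE => /eqP ->.
move=> /andP[Hl Hp] Hz.
have Hin : inn a b P i j w by apply: noness_inn => //; apply: Hz; rewrite in_cons eqxx.
case: (edge_in_P Hl) => k [l [H1 H2]]; case: (inn_uniq K Hin H1) => ? ?; subst k l.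
have Hs : {subset w' :: r <= P i j}.
  by apply: IH => // z Hz'; apply: Hz; rewrite in_cons Hz' orbT.
by move=> z; rewrite in_cons => /orP[/eqP -> //|]; apply: Hs.
Qed.

Lemma branch_in s : branch (VP P) (EP P) s ->
  exists i j, {subset s <= P i j} /\ bends s \subset [set a i; b j].
Proof.
case: s => [|u [|v t]]; rewrite /branch ?eqxx //.
move=> /andP[_ /and5P[U Hp Eu El Hall]].
move: (Hp) => /= /andP[Huv Hp'].
case: (edge_in_P Huv) => i [j [Hu Hv]]; exists i, j.
have Hsub : {subset u :: v :: t <= P i j}.
  move=> z; rewrite in_cons => /orP[/eqP -> //|]; apply: (follow Hv Hp').
  move=> z' Hz'; have Hz'' := mem_belast Hz'.
  move/allP: Hall => /(_ z'); rewrite in_cons Hz'' orbT => /(_ isT) /=.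
  move: U => /andP[Hnu U].
  have -> : (z' == u) = false by apply/negP => /eqP E; subst z'; rewrite Hz'' in Hnu.
  have -> : (z' == last v t) = false.
    apply/negP => /eqP E; have U' : uniq (v :: t) by []; move: U'; rewrite (lastI v t) rcons_uniq -E Hz'.
    by [].
  by [].
split => //; apply/subsetP=> z; rewrite !inE => /orP[]/eqP Ez; subst z.
  by case: (ess_in K Eu Hu) => ->; rewrite eqxx ?orbT.
have Hl : last v t \in P i j by apply: Hsub; rewrite in_cons mem_last orbT.
by move: El => /= El; case: (ess_in K El Hl) => ->; rewrite eqxx ?orbT.
Qed.

End Ident.
Section Improve.
Variable T : finType.
Variable e : rel T.

Lemma EP_sub_VP (P : 'I_3 -> 'I_3 -> seq T) (f : {set T}) : f \in EP P -> f \subset VP P.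
Proof.
case/mem_EP=> i [j [c [d [H ->]]]]; have [Hc Hd] := cp_mem H.
apply/subsetP=> z; rewrite !inE => /orP[]/eqP ->; apply/mem_VP; by exists i, j.
Qed.

Lemma improve (a b a' b' : 'I_3 -> T) (P P' : 'I_3 -> 'I_3 -> seq T) (x y z c d : T) :
  K33P e a b P -> K33P e a' b' P' ->
  (forall V'' E'', isK33sub e V'' E'' -> nbad e V'' E'' <= nbad e (VP P) (EP P) ->
      #|EP P| <= #|E''|) ->
  {subset VP P' <= VP P} ->
  (forall f, f \in EP P' -> f \in EP P \/ f = [set x; y]) ->
  (forall f, f \in EP P -> f \subset VP P' -> f \in EP P') ->
  z \notin VP P' -> c != z -> d != z -> c != d ->
  [set z; c] \in EP P -> [set z; d] \in EP P -> False.
Proof.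
move=> K K' Hmin HA HB HC Hz Hcz Hdz Hcd Ec Ed.
have Hle := Hmin _ _ (K33_to K').
suff Hlt : #|EP P'| < #|EP P|.
  have : #|EP P| <= #|EP P'|.
    apply: Hle; apply: subset_leq_card; apply/subsetP=> f; rewrite !inE.
    case/and3P=> Hg Hn Hs; rewrite Hg /=; apply/andP; split.
      by apply/negP => Hf; move: Hn; rewrite (HC f Hf Hs).
    by apply: subset_trans Hs _; apply/subsetP.
  by rewrite leqNgt Hlt.
set B := [set [set z; c]; [set z; d]].
set A := [set x; y] |: EP P.
have HB2 : #|B| = 2.
  rewrite cards2; case: eqP => // E.
  have : c \in [set z; d] by rewrite -E !inE eqxx orbT.
  by rewrite !inE (negbTE Hcz) (negbTE Hcd).
have HBA : B \subset A.
  by apply/subsetP=> f; rewrite !inE => /orP[]/eqP ->; rewrite ?Ec ?Ed orbT.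
have Hsub : EP P' \subset A :\: B.
  apply/subsetP=> f Hf; rewrite inE; apply/andP; split; last first.
    case: (HB f Hf) => [H|->]; rewrite !inE ?H ?eqxx ?orbT //.
  rewrite !inE; apply/negP => /orP[]/eqP Ef; move: (EP_sub_VP Hf); rewrite Ef;
    move/subsetP => /(_ z); rewrite !inE eqxx /= => /(_ isT) Hz'; by rewrite Hz' in Hz.
have := subset_leq_card Hsub.
rewrite cardsD (setIidPr HBA) HB2 /A cardsU1.
have : 0 < #|EP P| by apply/card_gt0P; exists [set z; c].
case: (_ \notin _) => /=; lia.
Qed.

End Improve.
Section SeqMore2.
Variable T : eqType.

Lemma split_mem (s : seq T) x : x \in s -> exists s1 s2, s = s1 ++ x :: s2.
Proof. by case/splitPr => s1 s2; exists s1, s2. Qed.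

Lemma rcons_split_mem (m u v : seq T) y c d :
  rcons m y = u ++ c :: d :: v -> c \in m.
Proof.
elim: u m => [|w u IH] [|w' m] //=.
- by case=> -> _; rewrite in_cons eqxx.
- by case: u IH => [|? ?] ? [].
- by case=> -> /IH H; rewrite in_cons H orbT.
Qed.

Lemma cp_mid (x y : T) m c d : (c, d) \in cp (x :: rcons m y) -> m != [::] ->
  c \in m \/ d \in m.
Proof.
case/cp_split=> [[|w s1] [s2 E]] Hm.
  case: E => _; case: m Hm => [|m0 m] //= _ [-> _]; right; by rewrite in_cons eqxx.
by case: E => _ /rcons_split_mem H; left.
Qed.

Lemma uniq_mid (s1 m s2 : seq T) x y w :
  uniq (s1 ++ x :: m ++ y :: s2) -> w \in m ->
  [/\ w \notin s1, w != x & w \notin y :: s2].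
Proof.
rewrite -cat1s catA cats1 => U Hw.
move: (U); rewrite cat_uniq => /and3P[_ /hasPn H1 U2].
have Hw1 : w \notin rcons s1 x by apply: H1; rewrite mem_cat Hw.
move: Hw1; rewrite mem_rcons in_cons negb_or => /andP[-> ->]; split => //.
move: U2; rewrite cat_uniq => /and3P[_ /hasPn H2 _]; apply/negP => Hw2.
by move: (H2 w Hw2); rewrite Hw.
Qed.

End SeqMore2.

Section Shortcut.
Variable T : finType.
Variable e : rel T.
Variables (a b : 'I_3 -> T) (P : 'I_3 -> 'I_3 -> seq T).
Hypothesis K : K33P e a b P.
Hypothesis Hmin : forall V'' E'', isK33sub e V'' E'' ->
  nbad e V'' E'' <= nbad e (VP P) (EP P) -> #|EP P| <= #|E''|.

Lemma shortcut_dir i j x y s1 m s2 :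
  e x y -> [set x; y] \notin EP P ->
  P i j = s1 ++ x :: m ++ y :: s2 -> False.
Proof.
move=> Hxy Hn Es.
have Us : uniq (s1 ++ x :: m ++ y :: s2) by rewrite -Es (k_uniq K).
have Hm : m != [::].
  apply/negP => /eqP Em; subst m; move: Hn; rewrite (EP_cp (i:=i) (j:=j)) //.
  by rewrite Es; apply/cp_split; exists s1, s2.
set s' := s1 ++ x :: y :: s2.
have Hsub : subseq s' (P i j).
  by rewrite Es; apply: cat_subseq => //=; rewrite eqxx; apply: suffix_subseq.
have Hmem : {subset s' <= P i j} by apply: mem_subseq.
have cp_s' : forall c d, (c, d) \in cp s' -> (c, d) = (x, y) \/ (c, d) \in cp (P i j).
  move=> c d /cp_cat[H|]; first by right; rewrite Es; apply/cp_cat; left.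
  rewrite cp_cons2 in_cons => /orP[/eqP -> |H]; first by left.
  by right; rewrite Es -cat_cons catA; apply: cp_catr.
have mid_out : forall w, w \in m -> w \notin s' /\ inn a b P i j w.
  move=> w Hw; case: (uniq_mid Us Hw) => H1 H2 H3.
  split.
    by rewrite /s' mem_cat negb_or H1 in_cons negb_or H2 /=; move: H3; rewrite !in_cons.
  rewrite /inn Es mem_cat in_cons mem_cat Hw !orbT /=.
  apply/andP; split.
    case: (k_head K i j) => t; rewrite Es; case: (s1) H1 => [|w1 s1'] /=.
      by move=> _ [<- _].
    by rewrite in_cons negb_or => /andP[H _] [<- _].
  rewrite -(k_last K i j) Es last_cat /= ; apply/negP => /eqP E.
  by move: H3; rewrite E last_cat /= mem_last.
pose P' := fun k l => if (k == i) && (l == j) then s' else P k l.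
have P'E : forall k l, ~~ ((k == i) && (l == j)) -> P' k l = P k l.
  by move=> k l /negbTE H; rewrite /P' H.
have P'ij : P' i j = s' by rewrite /P' !eqxx.
have innP : forall k l w, inn a b P' k l w -> inn a b P k l w.
  move=> k l w; case: (boolP ((k == i) && (l == j))) => [/andP[/eqP Ek /eqP El]|H].
    by subst k l; rewrite /inn P'ij; case/and3P=> /Hmem -> -> ->.
  by rewrite /inn P'E.
have K' : K33P e a b P'.
  split; try exact: (k_inja K); try exact: (k_injb K); try exact: (k_ab K).
  - move=> k l; rewrite /P'; case: andP => [[/eqP Ek /eqP El]|_]; [subst k l|]; last exact: (k_size K).
    by rewrite /s' size_cat /= !addnS.
  - move=> k l; rewrite /P'; case: andP => [[/eqP Ek /eqP El]|_]; [subst k l|]; last exact: (k_head K).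
    case: (k_head K i j) => t; rewrite Es /s'; case: (s1) => [|w1 s1'] /= [-> _].
      by eexists.
    by eexists.
  - move=> k l; rewrite /P'; case: andP => [[/eqP Ek /eqP El]|_]; [subst k l|]; last exact: (k_last K).
    by rewrite -(k_last K i j) Es /s' !last_cat /= last_cat.
  - move=> k l c d; rewrite /P'; case: andP => [[/eqP Ek /eqP El]|_]; [subst k l|]; last exact: (k_path K).
    by case/cp_s' => [[-> ->] //|]; apply: (k_path K).
  - move=> k l; rewrite /P'; case: andP => [[/eqP Ek /eqP El]|_]; [subst k l|]; last exact: (k_uniq K).
    exact: subseq_uniq Hsub (k_uniq K i j).
  - by move=> k l w /innP; apply: (k_notab K).
  - by move=> k l k' l' w /innP H1 /innP H2; apply: (k_disj K H1 H2).
have mid_nV : forall w, w \in m -> w \notin VP P'.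
  move=> w Hw; case: (mid_out w Hw) => H1 H2; apply/negP => /mem_VP[k [l]].
  case: (boolP ((k == i) && (l == j))) => [/andP[/eqP -> /eqP ->]|Hkl].
    by rewrite P'ij (negbTE H1).
  rewrite P'E // => /(inn_uniq K H2) [Ek El]; move: Hkl; by rewrite Ek El !eqxx.
case: m Hm Es Us mid_out mid_nV => [//|z m'] _ Es Us mid_out mid_nV.
have Hxz : (x, z) \in cp (P i j) by rewrite Es; apply/cp_split; exists s1, (m' ++ y :: s2).
have Hzd : (z, head y m') \in cp (P i j).
  rewrite Es; apply/cp_split; exists (rcons s1 x), (behead (m' ++ y :: s2)).
  by rewrite cat_rcons; case: (m').
apply: (@improve _ e a b a b P P' x y z x (head y m') K K' Hmin).
- move=> w /mem_VP[k [l]]; case: (boolP ((k == i) && (l == j))) => [/andP[/eqP -> /eqP ->]|Hkl].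
    by rewrite P'ij => /Hmem H; apply/mem_VP; exists i, j.
  by rewrite P'E // => H; apply/mem_VP; exists k, l.
- move=> f /mem_EP[k [l [c [d [H ->]]]]].
  case: (boolP ((k == i) && (l == j))) => [/andP[/eqP Ek /eqP El]|Hkl].
    subst k l; move: H; rewrite P'ij => /cp_s'[[-> ->]|H]; first by right.
    by left; apply: EP_cp H.
  by left; move: H; rewrite P'E // => H; apply: EP_cp H.
- move=> f /mem_EP[k [l [c [d [H ->]]]]] Hs.
  case: (boolP ((k == i) && (l == j))) => [/andP[/eqP Ek /eqP El]|Hkl]; last first.
    by apply: (@EP_cp _ P' k l); rewrite P'E.
  subst k l; apply: (@EP_cp _ P' i j); rewrite P'ij.
  move: H; rewrite Es => /cp_cat[H|]; first by apply/cp_cat; left.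
  rewrite -cat_cons => /cp_cat[H|H]; last by rewrite /s' -cat1s catA; apply: cp_catr.
  exfalso; case: (@cp_mid _ x y (z :: m') c d H isT) => [Hc|Hd].
    by move/subsetP: Hs => /(_ c); rewrite !inE eqxx (negbTE (mid_nV c Hc)) => /(_ isT).
  by move/subsetP: Hs => /(_ d); rewrite !inE eqxx orbT (negbTE (mid_nV d Hd)) => /(_ isT).
- by apply: mid_nV; rewrite in_cons eqxx.
- by rewrite (cp_neq (k_uniq K i j) Hxz).
- by rewrite eq_sym (cp_neq (k_uniq K i j) Hzd).
- have Hx : x \notin z :: m' ++ y :: s2.
    by move: Us; rewrite cat_uniq => /and3P[_ _ /andP[]].
  apply/negP => /eqP E; move: Hx; rewrite E; case: (m') => [|w ?] /=;
    by rewrite !in_cons ?mem_cat ?in_cons eqxx ?orbT.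
- by rewrite setUC; apply: EP_cp Hxz.
- by apply: EP_cp Hzd.
Qed.

Lemma shortcut i j x y : e x y -> e y x -> x != y -> [set x; y] \notin EP P ->
  x \in P i j -> y \in P i j -> False.
Proof.
move=> Hxy Hyx Hne Hn /split_mem[s1 [r E]]; rewrite E mem_cat in_cons.
case/or3P.
- move/split_mem=> [s1' [m Es1]]; apply: (@shortcut_dir i j y x s1' m r Hyx).
    by rewrite setUC.
  by rewrite E Es1 -catA.
- by move/eqP=> Eyx; move: Hne; rewrite Eyx eqxx.
- move/split_mem=> [m [s2 Er]]; apply: (@shortcut_dir i j x y s1 m s2 Hxy Hn).
  by rewrite E Er.
Qed.

End Shortcut.
Lemma three (j1 j2 l l' : 'I_3) : j1 != j2 -> l != j1 -> l != j2 -> l' != j1 -> l' != j2 -> l = l'.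
Proof.
move=> H1 H2 H3 H4 H5; apply/val_inj.
have := ltn_ord j1; have := ltn_ord j2; have := ltn_ord l; have := ltn_ord l'.
move: H1 H2 H3 H4 H5; rewrite -!val_eqE /=. lia.
Qed.

Lemma third (j1 j2 : 'I_3) : exists l : 'I_3, l != j1 /\ l != j2.
Proof.
have : 0 < #|~: [set j1; j2]|.
  have := cardsC [set j1; j2]; rewrite card_ord cards2.
  case: (j1 != j2) => /=; lia.
case/card_gt0P=> l; rewrite !inE negb_or => /andP[H1 H2]; by exists l.
Qed.

Lemma in_catr (T : eqType) (u v : seq T) w : w \in v -> w \in u ++ v.
Proof. by rewrite mem_cat => ->; rewrite orbT. Qed.
Lemma in_catl (T : eqType) (u v : seq T) w : w \in u -> w \in u ++ v.
Proof. by rewrite mem_cat => ->. Qed.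

Ltac neq_contra := match goal with
 | E : ?u = ?v, H : is_true (?u != ?v) |- _ => by have := H; rewrite E eqxx
 | E : ?u = ?v, H : is_true (?v != ?u) |- _ => by have := H; rewrite E eqxx
 | H : is_true (?u != ?u) |- _ => by have := H; rewrite eqxx
 end.
Ltac memcontra := match goal with
 | H1 : is_true (?w \in ?s), H2 : is_true (?w \notin ?s) |- _ => by have := H2; rewrite H1
 end.

Section MoveSec.
Variable T : finType.
Variable e : rel T.
Hypothesis e_sym : symmetric e.
Variables (a b : 'I_3 -> T) (P : 'I_3 -> 'I_3 -> seq T).
Hypothesis K : K33P e a b P.
Variables (i j1 j2 : 'I_3) (x y z : T) (q1 r1 q2 r2 : seq T).
Hypothesis Hj : j1 != j2.
Hypothesis Hxy : e x y.
Hypothesis Ix : inn a b P i j1 x.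
Hypothesis Iy : inn a b P i j2 y.
Hypothesis E1 : P i j1 = a i :: q1 ++ x :: r1.
Hypothesis E2 : P i j2 = a i :: z :: q2 ++ y :: r2.

Lemma U1 : uniq (a i :: q1 ++ x :: r1).
Proof. by rewrite -E1 (k_uniq K). Qed.
Lemma U2 : uniq (a i :: z :: q2 ++ y :: r2).
Proof. by rewrite -E2 (k_uniq K). Qed.

Lemma bj1_r1 : b j1 \in r1.
Proof.
have := k_last K i j1; rewrite E1 /= last_cat /= => Hl.
have := mem_last x r1; rewrite Hl in_cons => /orP[/eqP E|//].
by move: Ix => /and3P[_ _]; rewrite E eqxx.
Qed.

Lemma bj2_r2 : b j2 \in r2.
Proof.
have := k_last K i j2; rewrite E2 /= last_cat /= => Hl.
have := mem_last y r2; rewrite Hl in_cons => /orP[/eqP E|//].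
by move: Iy => /and3P[_ _]; rewrite E eqxx.
Qed.

Lemma last1 : last x r1 = b j1.
Proof. by have := k_last K i j1; rewrite E1 /= last_cat. Qed.
Lemma last2 : last y r2 = b j2.
Proof. by have := k_last K i j2; rewrite E2 /= last_cat. Qed.

Lemma x_notin l : x \in P i l -> l = j1.
Proof. by case/(inn_uniq K Ix). Qed.
Lemma y_notin l : y \in P i l -> l = j2.
Proof. by case/(inn_uniq K Iy). Qed.

Lemma inP1 w : w \in a i :: q1 ++ x :: r1 -> w \in P i j1.
Proof. by rewrite E1. Qed.
Lemma inP2 w : w \in a i :: z :: q2 ++ y :: r2 -> w \in P i j2.
Proof. by rewrite E2. Qed.

Lemma facts1 : [/\ a i \notin q1 ++ x :: r1, x \notin q1, x \notin r1 & ~~ has (mem q1) (x :: r1)].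
Proof.
have := U1; rewrite cons_uniq => /andP[-> U]; move: U; rewrite cat_uniq => /and3P[_ H /andP[Hx _]].
split => //.
  by apply/negP => Hq; move: H => /hasPn /(_ x); rewrite in_cons eqxx => /(_ isT) /negP; apply.
Qed.

Lemma Q1 w : w \in q1 -> [/\ inn a b P i j1 w, w != x & w \notin r1].
Proof.
move=> Hw; case: facts1 => Ha Hx _ Hh.
have Hwx : w != x by apply/negP => /eqP E; rewrite -E Hw in Hx.
have Hwr : w \notin r1.
  by apply/negP => Hr; move/hasPn: Hh => /(_ w); rewrite in_cons Hr orbT => /(_ isT) /negP; apply.
split => //; rewrite /inn inP1 /=; last by rewrite in_cons mem_cat Hw orbT.
apply/andP; split; apply/negP => /eqP E.
  by move: Ha; rewrite -E mem_cat Hw.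
by move: Hwr; rewrite E bj1_r1.
Qed.

Lemma R1 w : w \in r1 -> w != b j1 -> [/\ inn a b P i j1 w, w != x & w \notin q1].
Proof.
move=> Hw Hb; case: facts1 => Ha Hx Hxr Hh.
have Hwx : w != x by apply/negP => /eqP E; rewrite -E Hw in Hxr.
have Hwq : w \notin q1.
  by apply/negP => Hq; move/hasPn: Hh => /(_ w); rewrite in_cons Hw orbT => /(_ isT) /negP; apply.
split => //; rewrite /inn inP1 /=; last by rewrite in_cons mem_cat in_cons Hw !orbT.
rewrite Hb andbT; apply/negP => /eqP E.
by move: Ha; rewrite -E mem_cat in_cons Hw !orbT.
Qed.

Lemma facts2 : [/\ a i \notin z :: q2 ++ y :: r2 & ~~ has (mem (z :: q2)) (y :: r2)].
Proof.
have := U2; rewrite cons_uniq => /andP[-> U]; move: U; rewrite -cat_cons cat_uniq.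
by case/and3P.
Qed.

Lemma Zq w : w \in z :: q2 -> [/\ inn a b P i j2 w, w != x & w \notin y :: r2].
Proof.
move=> Hw; case: facts2 => Ha Hh.
have Hwr : w \notin y :: r2.
  by apply/negP => Hr; move/hasPn: Hh => /(_ w Hr) /negP; apply.
have HwP : w \in P i j2 by apply: inP2; rewrite -cat_cons in_cons mem_cat Hw orbT.
have Hwx : w != x.
  by apply/negP => /eqP E; rewrite E in HwP; move: (x_notin HwP) Hj => ->; rewrite eqxx.
split => //; rewrite /inn HwP /=.
apply/andP; split; apply/negP => /eqP E.
  by move: Ha; rewrite -E -cat_cons mem_cat Hw.
by move: Hwr; rewrite E in_cons bj2_r2 orbT.
Qed.

Lemma R2 w : w \in y :: r2 -> w != b j2 -> inn a b P i j2 w.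
Proof.
rewrite in_cons => /orP[/eqP -> //|Hw] Hb.
rewrite /inn inP2 /=; last by rewrite !in_cons mem_cat in_cons Hw !orbT.
rewrite Hb andbT; apply/negP => /eqP E; case: facts2 => Ha _.
by move: Ha; rewrite -E !in_cons mem_cat in_cons Hw !orbT.
Qed.

Definition a' k := if k == i then x else a k.
Definition P' k l :=
  if k == i then (if l == j1 then x :: r1 else if l == j2 then x :: y :: r2
                  else rev (rcons q1 x) ++ P i l)
  else P k l.

Variant idx_spec k l : Prop :=
  | IO of k != i
  | I1 of k = i & l = j1
  | I2 of k = i & l = j2
  | I3 of k = i & l != j1 & l != j2.

Lemma idxP k l : idx_spec k l.
Proof.
case: (boolP (k == i)) => [/eqP Hk|Hk]; last exact: IO.
case: (boolP (l == j1)) => [/eqP Hl|Hl1]; first exact: I1.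
case: (boolP (l == j2)) => [/eqP Hl|Hl2]; first exact: I2.
exact: I3.
Qed.

Lemma P'o k l : k != i -> P' k l = P k l.
Proof. by rewrite /P' => /negbTE ->. Qed.
Lemma P'1 : P' i j1 = x :: r1.
Proof. by rewrite /P' !eqxx. Qed.
Lemma P'2 : P' i j2 = x :: y :: r2.
Proof. by rewrite /P' eqxx eq_sym (negbTE Hj) eqxx. Qed.
Lemma P'3 l : l != j1 -> l != j2 -> P' i l = rev (rcons q1 x) ++ P i l.
Proof. by rewrite /P' eqxx => /negbTE -> /negbTE ->. Qed.
Lemma a'o k : k != i -> a' k = a k.
Proof. by rewrite /a' => /negbTE ->. Qed.
Lemma a'i : a' i = x.
Proof. by rewrite /a' eqxx. Qed.

Lemma x_nab k : x != a k /\ x != b k.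
Proof. exact: (k_notab K Ix). Qed.

Lemma revq1 : rev (rcons q1 x) = x :: rev q1.
Proof. by rewrite rev_rcons. Qed.

Lemma memP' k l w : w \in P' k l -> exists k0 l0, w \in P k0 l0.
Proof.
case: (idxP k l) => [Hk|-> ->|-> ->|-> H1 H2].
- by rewrite P'o // => H; exists k, l.
- rewrite P'1 => H; exists i, j1; apply: inP1; rewrite -cat_cons; exact: in_catr.
- rewrite P'2 in_cons => /orP[/eqP ->|H]; first by exists i, j1; apply: inn_in Ix.
  exists i, j2; apply: inP2; rewrite -2!cat_cons; exact: in_catr.
- rewrite P'3 // mem_cat mem_rev mem_rcons in_cons => /orP[/orP[/eqP ->|H]|H].
  + by exists i, j1; apply: inn_in Ix.
  + by exists i, j1; apply: inP1; rewrite in_cons mem_cat H orbT.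
  + by exists i, l.
Qed.

Lemma cpP' k l c d : (c, d) \in cp (P' k l) ->
  (c, d) = (x, y) \/ exists k0 l0, (c, d) \in cp (P k0 l0) \/ (d, c) \in cp (P k0 l0).
Proof.
case: (idxP k l) => [Hk|-> ->|-> ->|-> H1 H2].
- by rewrite P'o // => H; right; exists k, l; left.
- rewrite P'1 => H; right; exists i, j1; left; rewrite E1 -cat_cons; exact: cp_catr.
- rewrite P'2 cp_cons2 in_cons => /orP[/eqP -> |H]; first by left.
  by right; exists i, j2; left; rewrite E2 -2!cat_cons; exact: cp_catr.
- rewrite P'3 //; case: (k_head K i l) => t Et; rewrite Et => /cp_cat[H|H].
    right; exists i, j1; right; move: H; rewrite -rev_cons cp_rev => H.
    rewrite E1 -cat_cons; apply/cp_cat; left; exact: H.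
  by right; exists i, l; left; rewrite Et.
Qed.

Variant cls k l w : Prop :=
  | C1 of (k != i /\ inn a b P k l w)
  | C2 of (w \in r1 /\ inn a b P i j1 w /\ w != x /\ (k = i /\ l = j1 /\ w \notin q1))
  | C3 of (inn a b P i j2 w /\ w != x /\ (k = i /\ l = j2 /\ w \notin z :: q2))
  | C4 of (w \in q1 /\ inn a b P i j1 w /\ w != x /\ (k = i /\ l != j1 /\ l != j2))
  | C5 of ((w = a i \/ (inn a b P i l w /\ w != x)) /\ (k = i /\ l != j1 /\ l != j2)).

Lemma inn'_cases k l w : inn a' b P' k l w -> cls k l w.
Proof.
rewrite /inn; case: (idxP k l) => [Hk|-> ->|-> ->|-> H1 H2].
- by rewrite P'o // a'o // => H; exact: C1.
- rewrite P'1 a'i in_cons => /and3P[/orP[/eqP ->|Hw]]; first by rewrite eqxx.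
  move=> _ Hb; case: (R1 Hw Hb) => Hi Hx Hq; by exact: C2.
- rewrite P'2 a'i => /and3P[Hw Hx Hb].
  have Hw' : w \in y :: r2 by move: Hw; rewrite in_cons (negbTE Hx).
  have Hi := R2 Hw' Hb; apply: C3; split => //; split => //; split => //; split => //.
  apply/negP => Hz; case: (Zq Hz) => _ _; by rewrite Hw'.
- rewrite P'3 // a'i mem_cat mem_rev mem_rcons in_cons => /and3P[/orP[/orP[/eqP E|Hq]|Hp] Hx Hb].
  + by rewrite E eqxx in Hx.
  + case: (Q1 Hq) => Hi _ _; by exact: C4.
  + apply: C5; split => //.
    case: (boolP (w == a i)) => [/eqP ->|Ha]; first by left.
    by right; rewrite /inn Hp Ha Hb.
Qed.

Lemma ai_not_inn k l : ~~ inn a b P k l (a i).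
Proof. by apply/negP => /(k_notab K) /(_ i) []; rewrite eqxx. Qed.

Lemma K' : K33P e a' b P'.
Proof.
have [Hxa Hxb] := (fun k => x_nab k, 0).
split.
- move=> k k'; case: (boolP (k == i)) => [/eqP ->|Hk]; case: (boolP (k' == i)) => [/eqP ->|Hk'] //.
  + rewrite a'i a'o // => E; by case: (x_nab k'); rewrite E eqxx.
  + rewrite a'i a'o // => E; by case: (x_nab k); rewrite E eqxx.
  + by rewrite !a'o //; apply: (k_inja K).
- exact: (k_injb K).
- move=> k l; case: (boolP (k == i)) => [/eqP ->|Hk].
    by rewrite a'i; case: (x_nab l).
  by rewrite a'o // (k_ab K).
- move=> k l; case: (idxP k l) => [Hk|-> ->|-> ->|-> H1 H2].
  + by rewrite P'o // (k_size K).
  + by rewrite P'1 /=; move: bj1_r1; case: (r1).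
  + by rewrite P'2.
  + by rewrite P'3 // size_cat size_rev size_rcons; have := k_size K i l; lia.
- move=> k l; case: (idxP k l) => [Hk|-> ->|-> ->|-> H1 H2].
  + by rewrite P'o // a'o //; apply: (k_head K).
  + by rewrite P'1 a'i; eexists.
  + by rewrite P'2 a'i; eexists.
  + by rewrite P'3 // a'i revq1; eexists.
- move=> k l; case: (idxP k l) => [Hk|-> ->|-> ->|-> H1 H2].
  + by rewrite P'o // a'o //; apply: (k_last K).
  + by rewrite P'1 a'i /= last1.
  + by rewrite P'2 a'i /= last2.
  + rewrite P'3 // a'i last_cat -(k_last K i l); case: (k_head K i l) => t ->.
    by [].
- move=> k l c d /cpP'[[-> ->] //|[k0 [l0 [H|H]]]]; first exact: (k_path K H).
  by rewrite e_sym; apply: (k_path K H).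
- move=> k l; case: (idxP k l) => [Hk|-> ->|-> ->|-> H1 H2].
  + by rewrite P'o // (k_uniq K).
  + rewrite P'1; have := U1; rewrite cons_uniq => /andP[_]; rewrite cat_uniq.
    by case/and3P.
  + rewrite P'2 cons_uniq; apply/andP; split.
      apply/negP => Hx; have : x \in P i j2 by apply: inP2; rewrite -2!cat_cons; exact: in_catr.
      by move/x_notin => E; move: Hj; rewrite E eqxx.
    have := U2; rewrite cons_uniq => /andP[_]; rewrite -cat_cons cat_uniq.
    by case/and3P.
  + rewrite P'3 // cat_uniq rev_uniq (k_uniq K) andbT; apply/andP; split.
      have := U1; rewrite cons_uniq => /andP[_]; rewrite -cat_rcons cat_uniq.
      by case/and3P.
    apply/hasPn=> w Hw; rewrite mem_rev mem_rcons in_cons; apply/negP => /orP[/eqP E|Hq].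
      by rewrite E in Hw; move: (x_notin Hw) H1 => ->; rewrite eqxx.
    case: (Q1 Hq) => Hi _ _; case: (inn_uniq K Hi Hw) => _ E.
    by rewrite E eqxx in H1.
- move=> k l w /inn'_cases[[Hk Hi]|[_ [Hi [Hx _]]]|[Hi [Hx _]]|[_ [Hi [Hx _]]]|[Hw _]] m.
  + have Hx : w != x.
      apply/negP => /eqP E; rewrite E in Hi; case: (inn_uniq K Ix (inn_in Hi)) => Ek _.
      by rewrite Ek eqxx in Hk.
    have [Ha Hb] := k_notab K Hi m; rewrite /a'; by case: (m == i).
  + have [Ha Hb] := k_notab K Hi m; rewrite /a'; by case: (m == i).
  + have [Ha Hb] := k_notab K Hi m; rewrite /a'; by case: (m == i).
  + have [Ha Hb] := k_notab K Hi m; rewrite /a'; by case: (m == i).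
  + case: Hw => [->|[Hi Hx]]; last first.
      have [Ha Hb] := k_notab K Hi m; rewrite /a'; by case: (m == i).
    rewrite /a'; split; last by rewrite (k_ab K).
    case: (boolP (m == i)) => [_|Hm]; first by rewrite eq_sym; case: (x_nab i).
    by apply/negP => /eqP /(k_inja K) E; rewrite E eqxx in Hm.
- move=> k l k' l' w H H'.
  case/inn'_cases: H => [[Hk Hi]|[Hr [Hi [Hx [Ek [El Hq]]]]]|[Hi [Hx [Ek [El Hz]]]]|[Hq [Hi [Hx [Ek [Hl1 Hl2]]]]]|[[Ew|[Hi Hx]] [Ek [Hl1 Hl2]]]];
  case/inn'_cases: H' => [[Hk' Hi']|[Hr' [Hi' [Hx' [Ek' [El' Hq']]]]]|[Hi' [Hx' [Ek' [El' Hz']]]]|[Hq' [Hi' [Hx' [Ek' [Hl1' Hl2']]]]]|[[Ew'|[Hi' Hx']] [Ek' [Hl1' Hl2']]]];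
  try subst k; try subst k'; try subst l; try subst l'; try subst w.
  all: try (by split).
  all: try (by split => //; apply: (three Hj); assumption).
  all: try (by exact: (k_disj K Hi Hi')).
  all: try (by case: (k_disj K Hi Hi') => E1' E2'; neq_contra).
  all: try (by memcontra).
  all: match goal with H : is_true (inn a b P ?k0 ?l0 (a i)) |- _ =>
         by have := ai_not_inn k0 l0; rewrite H end.
Qed.

Lemma zq_out w : w \in z :: q2 -> w \notin VP P'.
Proof.
move=> Hw; case: (Zq Hw) => Hi Hx Hr; apply/negP => /mem_VP[k [l]].
case: (idxP k l) => [Hk|-> ->|-> ->|-> H1 H2].
- rewrite P'o // => /(inn_uniq K Hi) [Ek _]; by move: Hk; rewrite Ek eqxx.
- rewrite P'1 in_cons => /orP[/eqP E|Hw1]; first by move: Hx; rewrite E eqxx.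
  have : w \in P i j1.
    by apply: inP1; rewrite -cat_cons; apply: in_catr; rewrite in_cons; apply/orP; right.
  by move/(inn_uniq K Hi) => [_ E]; move: Hj; rewrite E eqxx.
- rewrite P'2 in_cons => /orP[/eqP E|Hw1]; first by move: Hx; rewrite E eqxx.
  by move: Hr; rewrite Hw1.
- rewrite P'3 // mem_cat mem_rev mem_rcons in_cons => /orP[/orP[/eqP E|Hq]|Hp].
  + by move: Hx; rewrite E eqxx.
  + case: (Q1 Hq) => Hi1 _ _; case: (k_disj K Hi Hi1) => _ E.
    by move: Hj; rewrite E eqxx.
  + by case: (inn_uniq K Hi Hp) => _ E; move: H2; rewrite E eqxx.
Qed.

Lemma move_dir : (forall V'' E'', isK33sub e V'' E'' ->
  nbad e V'' E'' <= nbad e (VP P) (EP P) -> #|EP P| <= #|E''|) -> False.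
Proof.
move=> Hmin.
have Haz : (a i, z) \in cp (P i j2) by rewrite E2 cp_cons2 in_cons eqxx.
have Hzd : (z, head y q2) \in cp (P i j2).
  by rewrite E2 -cat1s; apply: cp_catr; case: (q2) => [|? ?] /=; rewrite in_cons eqxx.
apply: (@improve _ e a b a' b P P' x y z (a i) (head y q2) K K' Hmin).
- move=> w /mem_VP[k [l /memP' [k0 [l0 H]]]]; apply/mem_VP; by exists k0, l0.
- move=> f /mem_EP[k [l [c [d [H ->]]]]].
  case: (cpP' H) => [[-> ->]|[k0 [l0 [H0|H0]]]]; first by right.
    by left; apply: EP_cp H0.
  by left; rewrite setUC; apply: EP_cp H0.
- move=> f /mem_EP[k [l [c [d [H ->]]]]] Hs.
  case: (idxP k l) H => [Hk|-> ->|-> ->|-> H1 H2] H.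
  + by apply: (@EP_cp _ P' k l); rewrite P'o.
  + move: H; rewrite E1 -cat_cons => /cp_cat[H|H]; last by apply: (@EP_cp _ P' i j1); rewrite P'1.
    case: (third j1 j2) => l3 [H1 H2]; rewrite setUC; apply: (@EP_cp _ P' i l3).
    rewrite P'3 //; case: (k_head K i l3) => t3 ->; apply/cp_cat; left.
    by rewrite -rev_cons cp_rev.
  + move: H; rewrite E2 -2!cat_cons => /cp_cat[H|H]; last first.
      by apply: (@EP_cp _ P' i j2); rewrite P'2 -cat1s; apply: cp_catr.
    exfalso; case: (@cp_mid _ (a i) y (z :: q2) c d H isT) => [Hc|Hd].
      by move/subsetP: Hs => /(_ c); rewrite !inE eqxx (negbTE (zq_out Hc)) => /(_ isT).
    by move/subsetP: Hs => /(_ d); rewrite !inE eqxx orbT (negbTE (zq_out Hd)) => /(_ isT).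
  + by apply: (@EP_cp _ P' i l); rewrite P'3 //; apply: cp_catr.
- by apply: zq_out; rewrite in_cons eqxx.
- exact: (cp_neq (k_uniq K i j2) Haz).
- by rewrite eq_sym (cp_neq (k_uniq K i j2) Hzd).
- case: facts2 => Ha _; apply/negP => /eqP E; move: Ha; rewrite E in_cons.
  by case: (q2) => [|? ?] /=; rewrite ?mem_cat !in_cons eqxx ?orbT.
- by rewrite setUC; apply: EP_cp Haz.
- by apply: EP_cp Hzd.
Qed.

End MoveSec.
Lemma move_gen (T : finType) (e : rel T) (e_sym : symmetric e) (e_tf : triangle_free e)
  a b P (K : K33P e a b P)
  (Hmin : forall V'' E'', isK33sub e V'' E'' ->
     nbad e V'' E'' <= nbad e (VP P) (EP P) -> #|EP P| <= #|E''|)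
  i j1 j2 x y : j1 != j2 -> e x y -> inn a b P i j1 x -> inn a b P i j2 y -> False.
Proof.
move=> Hj Hxy Ix Iy.
case: (k_head K i j1) => t1 E1; case: (k_head K i j2) => t2 E2.
have Hx1 : x \in t1.
  by move: (Ix) => /and3P[]; rewrite E1 in_cons => /orP[/eqP ->|//]; rewrite eqxx.
have Hy2 : y \in t2.
  by move: (Iy) => /and3P[]; rewrite E2 in_cons => /orP[/eqP ->|//]; rewrite eqxx.
case/split_mem: Hx1 => q1 [r1 Et1]; case/split_mem: Hy2 => q2' [r2 Et2].
rewrite Et1 in E1; rewrite Et2 in E2; clear Et1 Et2.
case: q2' E2 => [|z q2] E2; last first.
  exact: (move_dir e_sym K Hj Hxy Ix Iy E1 E2 Hmin).
case: q1 E1 => [|z q1] E1; last first.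
  have Hj' : j2 != j1 by rewrite eq_sym.
  have Hyx : e y x by rewrite e_sym.
  exact: (move_dir e_sym K Hj' Hyx Iy Ix E2 E1 Hmin).
have Hax : e (a i) x by apply: (k_path K (i:=i) (j:=j1)); rewrite E1 /= in_cons eqxx.
have Hay : e (a i) y by apply: (k_path K (i:=i) (j:=j2)); rewrite E2 /= in_cons eqxx.
by apply: (e_tf (a i) x y Hax Hxy); rewrite e_sym.
Qed.

Unset Implicit Arguments.

Theorem mainTheorem7 (T : finType) (e : rel T)
  (e_sym : symmetric e) (e_irr : irreflexive e) (e_tf : triangle_free e)
  (V : {set T}) (E : {set {set T}}) (HK : isK33sub e V E)
  (Hmin : forall (V'' : {set T}) (E'' : {set {set T}}),
      isK33sub e V'' E'' -> nbad e V'' E'' <= nbad e V E -> #|E| <= #|E''|) :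
  forall x y : T, bad_edge e V E x y ->
    ~ (exists s, [/\ branch V E s, x \in s & y \in s]) /\
    ~ (exists s1 s2, [/\ adjacent_branches V E s1 s2,
                          ~~ essential V E x, ~~ essential V E y, x \in s1 & y \in s2]).
Proof.
move=> x y /and4P[Hxy HnE HxV HyV].
case: (K33_of HK) => a [b [P [K EV EE]]]; subst V E.
have Hyx : e y x by rewrite e_sym.
have Hne : x != y by apply/negP => /eqP E; rewrite E e_irr in Hxy.
split.
  case=> s [Hb Hx Hy]; case: (branch_in e_sym K Hb) => i [j [Hsub _]].
  exact: (shortcut K Hmin Hxy Hyx Hne HnE (Hsub x Hx) (Hsub y Hy)).
case=> s1 [s2 [[B1 B2 _ _ Hint] Nx Ny Hx Hy]].
case: (branch_in e_sym K B1) => i [j1 [Hsub1 Hb1]].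
case: (branch_in e_sym K B2) => i' [j2 [Hsub2 Hb2]].
have Hx1 := Hsub1 x Hx; have Hy2 := Hsub2 y Hy.
have Ix := noness_inn e_sym K Hx1 Nx; have Iy := noness_inn e_sym K Hy2 Ny.
case/set0Pn: Hint => w; rewrite inE => /andP[Hw1 Hw2].
move/subsetP: Hb1 => /(_ w Hw1); move/subsetP: Hb2 => /(_ w Hw2).
rewrite !inE => /orP[]/eqP Ew2 /orP[]/eqP Ew1.
-
  have Ei : i = i' by apply: (k_inja K); rewrite -Ew1 -Ew2.
  subst i'; case: (boolP (j1 == j2)) => [/eqP Ej|Hj].
    by subst j2; apply: (shortcut K Hmin Hxy Hyx Hne HnE Hx1 Hy2).
  exact: (move_gen e_sym e_tf K Hmin Hj Hxy Ix Iy).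
- by move: (k_ab K i' j1); rewrite -Ew1 -Ew2 eqxx.
- by move: (k_ab K i j2); rewrite -Ew1 -Ew2 eqxx.
- have Ej : j1 = j2 by apply: (k_injb K); rewrite -Ew1 -Ew2.
  subst j2; case: (boolP (i == i')) => [/eqP Ei|Hi].
    by subst i'; apply: (shortcut K Hmin Hxy Hyx Hne HnE Hx1 Hy2).
  have KT := K33_T e_sym K.
  have HminT : forall V'' E'', isK33sub e V'' E'' ->
      nbad e V'' E'' <= nbad e (VP (PT P)) (EP (PT P)) -> #|EP (PT P)| <= #|E''|.
    by rewrite VP_T EP_T.
  apply: (move_gen e_sym e_tf KT HminT Hi Hxy (i:=j1)); by rewrite innT.
Qed.
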